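(* Let $d\ge1$ and $c_0>0$. There exists $C<\infty$ (depending only on $d$ and $c_0$) such that for all $\epsilon>0$, $\theta>0$ with $\theta\epsilon^2\ge c_0$, all $t\ge0$ and all $x,y\in\mathbb R^d$, $$\big|\psi^{\epsilon,x}_t(y)-p_{\epsilon^2+t}(x,y)\big|\le\frac{C}{(\epsilon^2\theta)^{1/2}}p_{6(\epsilon^2+t)}(x,y)+\frac{C}{(\epsilon^2+t)^{d/2}}\exp(-\epsilon^2\theta/2).$$
   Context: $p_t(x,y)=(2\pi t)^{-d/2}\exp(-\|x-y\|^2/(2t))$ is the heat kernel. $q_\theta(x,dy)$ is the Gaussian distribution with mean $x$ and covariance $\theta^{-1}I$, $\mathcal L^\theta f(x)=\theta\int(f(y)-f(x))q_\theta(x,dy)$, and $\psi^{\epsilon,x}_t$ is the solution of $\partial_t\psi=\mathcal L^\theta\psi$ with $\psi_0(y)=p_{\epsilon^2}(x,y)$; equivalently $\psi^{\epsilon,x}_t(y)=\mathbb E[p_{\epsilon^2+\Pi(\theta t)/\theta}(x,y)]$ for a rate one Poisson process $\Pi$. *)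

(* Defs.v *)
From HB Require Import structures.
From mathcomp Require Import all_boot all_order all_algebra.
From mathcomp Require Import all_classical all_reals all_analysis.
Set Implicit Arguments. Unset Strict Implicit. Unset Printing Implicit Defensive.
Import Order.TTheory GRing.Theory Num.Theory.
Local Open Scope ring_scope.

Definition sqdist {R : realType} {d : nat} (x y : 'rV[R]_d) : R :=
  \sum_(i < d) (x ord0 i - y ord0 i) ^+ 2.

Definition heat {R : realType} {d : nat} (t : R) (x y : 'rV[R]_d) : R :=
  powR (2 * pi * t) (- (d%:R / 2)) * expR (- sqdist x y / (2 * t)).

(* psi^{eps,x}_t(y) = E[ p_{eps^2 + Pi(theta t)/theta}(x,y) ], Pi a rate-one
   Poisson process, i.e. Pi(theta t) ~ Poisson(theta t):
   sum_k e^{-theta t} (theta t)^k / k! * p_{eps^2 + k/theta}(x,y). *)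
Definition psi {R : realType} {d : nat} (theta eps t : R) (x y : 'rV[R]_d) : R :=
  limn (fun n => \sum_(0 <= k < n)
     (expR (- (theta * t)) * (theta * t) ^+ k / (k`!)%:R
       * heat (eps ^+ 2 + k%:R / theta) x y)).

(* Main.v *)
Require Import Defs.
From HB Require Import structures.
From mathcomp Require Import all_boot all_order all_algebra.
From mathcomp Require Import all_classical all_reals all_analysis.
From mathcomp Require Import ring lra.
Import Order.TTheory GRing.Theory Num.Theory.
Import numFieldNormedType.Exports.
Local Open Scope ring_scope.
Local Open Scope classical_set_scope.

Section All.
Variable R : realType.

Definition PE (l : R) (g : nat -> R) (n : nat) : R :=
  \sum_(0 <= k < n) (expR (- l) * l ^+ k / (k`!)%:R * g k).

Lemma cvg_expc (x : R) : series (exp_coeff x) n @[n --> \oo] --> expR x.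
Proof. exact: (is_cvg_series_exp_coeff x). Qed.

Lemma PE_pow (l b : R) n :
  PE l (fun k => b ^+ k) n = expR (- l) * series (exp_coeff (l * b)) n.
Proof.
rewrite /PE /series /= big_distrr /=; apply: eq_bigr => k _.
by rewrite /exp_coeff /= exprMn; ring.
Qed.

Lemma cvg_PE_pow (l b : R) :
  PE l (fun k => b ^+ k) n @[n --> \oo] --> expR (- l) * expR (l * b).
Proof.
rewrite (_ : PE l _ = fun n => expR (- l) * series (exp_coeff (l * b)) n).
  by apply: cvgMl_tmp; exact: cvg_expc.
by apply/funext => n; rewrite PE_pow.
Qed.

Lemma cvg_PE1 (l : R) : PE l (fun=> 1) n @[n --> \oo] --> (1 : R).
Proof.
rewrite (_ : PE l _ = PE l (fun k => 1 ^+ k)); last first.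
  by apply/funext => n; apply: eq_bigr => k _; rewrite expr1n.
have := cvg_PE_pow l 1; rewrite mulr1 mulrC expRxMexpNx_1; exact.
Qed.

Lemma PE_k (l : R) m :
  PE l (fun k => k%:R) m.+1 = l * PE l (fun=> 1) m.
Proof.
rewrite /PE big_nat_recl //= mulr0 add0r big_distrr /=.
apply: eq_bigr => k _.
rewrite factS natrM invfM exprS mulr1 /=.
have k1 : (k.+1%:R : R) != 0 by rewrite pnatr_eq0.
field; rewrite nat1r !pnatr_eq0 -lt0n fact_gt0 //.
Qed.

Lemma cvg_PEk (l : R) : PE l (fun k => k%:R) n @[n --> \oo] --> l.
Proof.
rewrite -cvg_shiftS.
rewrite (_ : [sequence _]_n = fun m => l * PE l (fun=> 1) m); last first.
  by apply/funext => m /=; rewrite PE_k.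
have H := @cvgMl_tmp _ _ _ _ _ l _ (cvg_PE1 l); rewrite mulr1 in H; exact: H.
Qed.

Lemma PE_kk (l : R) m :
  PE l (fun k => k%:R * (k%:R - 1)) m.+2 = l ^+ 2 * PE l (fun=> 1) m.
Proof.
rewrite /PE big_nat_recl //= big_nat_recl //= mul0r mulr0 add0r.
rewrite subrr mulr0 mulr0 add0r big_distrr /=.
apply: eq_bigr => k _.
rewrite !factS !natrM !invfM !exprS mulr1 /=.
have k1 : (k.+1%:R : R) != 0 by rewrite pnatr_eq0.
have k2 : (k.+2%:R : R) != 0 by rewrite pnatr_eq0.
have kf : ((k`!)%:R : R) != 0 by rewrite pnatr_eq0 -lt0n fact_gt0.
field; by rewrite kf nat1r -natrD !pnatr_eq0.
Qed.

Lemma cvg_PEkk (l : R) : PE l (fun k => k%:R * (k%:R - 1)) n @[n --> \oo] --> l ^+ 2.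
Proof.
rewrite -cvg_shiftS -cvg_shiftS.
rewrite (_ : [sequence _]_n = fun m => l ^+ 2 * PE l (fun=> 1) m); last first.
  by apply/funext => m /=; rewrite PE_kk.
have H := @cvgMl_tmp _ _ _ _ _ (l ^+ 2) _ (cvg_PE1 l); rewrite mulr1 in H; exact: H.
Qed.

Lemma cvg_PEvar (l : R) : PE l (fun k => (k%:R - l) ^+ 2) n @[n --> \oo] --> l.
Proof.
rewrite (_ : PE l _ = fun n => PE l (fun k => k%:R * (k%:R - 1)) n
     + (1 - 2 * l) * PE l (fun k => k%:R) n + l ^+ 2 * PE l (fun=> 1) n).
  have H := cvgD (cvgD (cvg_PEkk l) (@cvgMl_tmp _ _ _ _ _ (1 - 2 * l) _ (cvg_PEk l)))
     (@cvgMl_tmp _ _ _ _ _ (l ^+ 2) _ (cvg_PE1 l)).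
  have E : l ^+ 2 + (1 - 2 * l) * l + l ^+ 2 * 1 = l by ring.
  rewrite E in H; exact: H.
apply/funext => n; rewrite /PE !big_distrr -!big_split /=.
by apply: eq_bigr => k _; ring.
Qed.



Definition hk (D r t : R) : R := powR (2 * pi * t) (- D) * expR (- r / (2 * t)).

Lemma exp_lip (u v M : R) : expR u <= M -> expR v <= M ->
  `|expR u - expR v| <= `|u - v| * M.
Proof.
wlog vu : u v / v <= u.
  move=> H hu hv; have [vu|uv] := leP v u; first exact: H.
  by rewrite distrC (distrC u); apply: H => //; exact: ltW.
move=> hu _.
have e1 : expR v <= expR u by rewrite ler_expR.
rewrite ger0_norm ?subr_ge0 // ger0_norm ?subr_ge0 //.
have h : expR u * (1 + (v - u)) <= expR v.
  have -> : expR v = expR u * expR (v - u) by rewrite -expRD; congr expR; ring.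
  by rewrite ler_pM2l ?expR_gt0 // expR_ge1Dx.
apply: (@le_trans _ _ ((u - v) * expR u)); first nra.
by rewrite ler_wpM2l // subr_ge0.
Qed.

Lemma powRN_le (D x y : R) : 0 <= D -> 0 < x -> x <= y ->
  powR y (- D) <= powR x (- D).
Proof.
move=> D0 x0 xy.
have y0 : 0 < y by apply: lt_le_trans xy.
rewrite !powRN lef_pV2 ?posrE ?powR_gt0 //.
by apply: ge0_ler_powR => //; rewrite nnegrE ltW.
Qed.

Lemma hk_ge0 D r t : 0 <= hk D r t.
Proof. by rewrite /hk mulr_ge0 ?powR_ge0 ?expR_ge0. Qed.

Lemma hk_le_pow D r t : 0 <= r -> 0 < t -> hk D r t <= powR (2 * pi * t) (- D).
Proof.
move=> r0 t0; rewrite /hk -[X in _ <= X]mulr1 ler_wpM2l ?powR_ge0 //.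
rewrite expR_le1 mulNr oppr_le0; apply: divr_ge0 => //; lra.
Qed.

Lemma hkE D r t : 0 < t -> hk D r t = expR (- D * ln (2 * pi * t) - r / (2 * t)).
Proof.
move=> t0; rewrite /hk /powR.
have pi0 : 0 < pi :> R := pi_gt0 R.
have H : 2 * pi * t != 0 by apply/lt0r_neq0; apply: mulr_gt0 => //; apply: mulr_gt0.
rewrite (negbTE H) -expRD; congr expR; ring.
Qed.

Lemma ln_le_sub1 (x : R) : 0 < x -> ln x <= x - 1.
Proof.
move=> x0; have h : -1 < x - 1 by lra.
have := @le_ln1Dx R (x - 1) h.
by have -> : 1 + (x - 1) = x by ring.
Qed.

Lemma ln_ratio (s t : R) : 0 < s -> s / 2 <= t ->
  `|ln (2 * pi * t) - ln (2 * pi * s)| <= 2 * `|t - s| / s.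
Proof.
move=> s0 st.
have t0 : 0 < t by lra.
have pi0 : 0 < pi :> R := pi_gt0 R.
have p0 : 0 < 2 * pi :> R by lra.
rewrite (lnM (x := 2 * pi)) ?posrE // (lnM (x := 2 * pi)) ?posrE //.
have -> : ln (2 * pi) + ln t - (ln (2 * pi) + ln s) = ln t - ln s by ring.
have h1 : ln t - ln s <= t / s - 1.
  by rewrite -ln_div ?posrE //; apply: ln_le_sub1; apply: divr_gt0.
have h2 : ln s - ln t <= s / t - 1.
  by rewrite -ln_div ?posrE //; apply: ln_le_sub1; apply: divr_gt0.
set a := `|t - s|.
have a1 : t - s <= a by apply: ler_norm.
have a2 : s - t <= a by rewrite /a distrC; apply: ler_norm.
have is1 : s * s^-1 = 1 by rewrite mulfV // gt_eqF.
have it1 : t * t^-1 = 1 by rewrite mulfV // gt_eqF.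
have is0 : 0 < s^-1 by rewrite invr_gt0.
have it0 : 0 < t^-1 by rewrite invr_gt0.
rewrite ler_norml; apply/andP; split.
- have e : s / t - 1 = (s - t) * t^-1 by rewrite mulrBl it1.
  rewrite e in h2.
  have : (s - t) * t^-1 <= 2 * a / s.
    rewrite ler_pdivlMr //.
    have wt : (s - t) / t * t = s - t by rewrite -mulrA mulVf ?gt_eqF // mulr1.
    have a0 : 0 <= a by apply: normr_ge0.
    have [sl|sg] := leP s t.
      have : (s - t) / t <= 0 by rewrite pmulr_lle0 ?invr_gt0 //; lra.
      nra.
    have : 0 <= (s - t) / t by rewrite divr_ge0 //; lra.
    nra.
  lra.
- have e : t / s - 1 = (t - s) * s^-1 by rewrite mulrBl is1.
  rewrite e in h1.
  have : (t - s) * s^-1 <= 2 * a / s.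
    rewrite ler_pdivlMr // -mulrA mulVf ?gt_eqF // mulr1.
    nra.
  lra.
Qed.


Lemma hk_le_M D r s z : 0 <= D -> 0 <= r -> 0 < s -> s / 2 <= z -> z <= 3 * s ->
  hk D r z <= powR (pi * s) (- D) * expR (- r / (6 * s)).
Proof.
move=> D0 r0 s0 sz zs.
have pi0 : 0 < pi :> R := pi_gt0 R.
have z0 : 0 < z by lra.
rewrite /hk; apply: ler_pM; rewrite ?powR_ge0 ?expR_ge0 //.
  apply: powRN_le => //; first exact: mulr_gt0.
  nra.
rewrite ler_expR !mulNr lerN2.
rewrite ler_pdivrMr ?mulr_gt0 // mulrAC ler_pdivlMr ?mulr_gt0 //.
nra.
Qed.

Lemma yexp_le (y : R) : y * expR (- (2 * y)) <= expR (- y).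
Proof.
have e : expR (- (2 * y)) = expR (- y) * expR (- y) by rewrite -expRD; congr expR; ring.
rewrite e mulrA -[X in _ <= X]mul1r ler_wpM2r ?expR_ge0 //.
have h := expR_ge1Dx y.
have h2 : expR y * expR (- y) = 1 by rewrite expRxMexpNx_1.
have := expR_gt0 (- y); have := expR_gt0 y.
nra.
Qed.

Lemma hk_mid D r s z : 0 <= D -> 0 <= r -> 0 < s -> s / 2 <= z -> z <= 3 * s ->
  `|hk D r z - hk D r s| <=
     powR 12 D * (2 * D + 12) * (`|z - s| / s) * hk D r (6 * s).
Proof.
move=> D0 r0 s0 sz zs.
have pi0 : 0 < pi :> R := pi_gt0 R.
have z0 : 0 < z by lra.
set M := powR (pi * s) (- D) * expR (- r / (6 * s)).
have hz := @hk_le_M D r s z D0 r0 s0 sz zs.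
have hs : hk D r s <= M by apply: hk_le_M => //; lra.
rewrite (hkE D r z z0) (hkE D r s s0) in hz hs *.
apply: le_trans (exp_lip _ _ _ hz hs) _.
set a := `|z - s|.
have a0 : 0 <= a := normr_ge0 _.
have huv : `|(- D * ln (2 * pi * z) - r / (2 * z)) - (- D * ln (2 * pi * s) - r / (2 * s))|
    <= (2 * D + r / s) * (a / s).
  have e : (- D * ln (2 * pi * z) - r / (2 * z)) - (- D * ln (2 * pi * s) - r / (2 * s))
      = (- D) * (ln (2 * pi * z) - ln (2 * pi * s)) + r / (2 * z * s) * (z - s).
    by field; apply/andP; split; rewrite gt_eqF.
  rewrite e; apply: le_trans (ler_normD _ _) _.
  rewrite !normrM normrN (ger0_norm D0).
  have l1 := ln_ratio s z s0 sz.
  have q0 : 0 <= r / (2 * z * s) by rewrite divr_ge0 // mulr_ge0 // ?mulr_ge0 // ltW.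
  have p0 : 0 < 2 * z * s by rewrite mulr_gt0 // mulr_gt0.
  have ip : 0 <= (2 * z * s)^-1 by rewrite invr_ge0 ltW.
  rewrite (ger0_norm r0) (ger0_norm ip) -/a.
  have iv : (2 * z * s)^-1 <= s^-1 * s^-1.
    rewrite -invfM lef_pV2 ?posrE ?mulr_gt0 //; nra.
  have l2 : r * (2 * z * s)^-1 * a <= r / s * (a / s).
    have -> : r / s * (a / s) = r * (s^-1 * s^-1) * a by ring.
    by rewrite ler_wpM2r // ler_wpM2l.
  have l3 : D * `|ln (2 * pi * z) - ln (2 * pi * s)| <= D * (2 * a / s).
    by rewrite ler_wpM2l.
  have -> : (2 * D + r / s) * (a / s) = D * (2 * a / s) + r / s * (a / s) by ring.
  exact: lerD.
have M0 : 0 <= M by rewrite /M mulr_ge0 ?powR_ge0 ?expR_ge0.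
apply: le_trans (ler_wpM2r M0 huv) _.
set y := r / (12 * s).
have y0 : 0 <= y by rewrite divr_ge0 // mulr_ge0 // ltW.
have e1 : - r / (6 * s) = - (2 * y) by rewrite /y; field; rewrite gt_eqF.
have e2 : r / s = 12 * y by rewrite /y; field; rewrite gt_eqF.
have e3 : - r / (2 * (6 * s)) = - y by rewrite /y; field; rewrite gt_eqF.
have e4 : powR (pi * s) (- D) = powR 12 D * powR (2 * pi * (6 * s)) (- D).
  have -> : 2 * pi * (6 * s) = 12 * (pi * s) by ring.
  rewrite [X in _ = _ * X](@powRM _ 12) ?mulr_ge0 // ?ltW // mulrA.
  rewrite [12 `^ (- D)]powRN mulfV ?mul1r //.
have ex : (2 * D + r / s) * expR (- r / (6 * s)) <= (2 * D + 12) * expR (- y).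
  rewrite e1 e2 [in X in X <= _]mulrDl [in X in _ <= X]mulrDl.
  apply: lerD.
    by rewrite ler_wpM2l ?mulr_ge0 // ler_expR; lra.
  rewrite -mulrA ler_wpM2l //; exact: yexp_le.
rewrite /hk e3 /M e4.
have P0 : 0 <= powR 12 D * powR (2 * pi * (6 * s)) (- D) by rewrite mulr_ge0 ?powR_ge0.
have as0 : 0 <= a / s by rewrite divr_ge0 // ltW.
have -> : (2 * D + r / s) * (a / s) *
    (powR 12 D * powR (2 * pi * (6 * s)) (- D) * expR (- r / (6 * s)))
  = (a / s) * (powR 12 D * powR (2 * pi * (6 * s)) (- D)) *
    ((2 * D + r / s) * expR (- r / (6 * s))) by ring.
have -> : powR 12 D * (2 * D + 12) * (a / s) *
    (powR (2 * pi * (6 * s)) (- D) * expR (- y))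
  = (a / s) * (powR 12 D * powR (2 * pi * (6 * s)) (- D)) *
    ((2 * D + 12) * expR (- y)) by ring.
by rewrite ler_wpM2l // mulr_ge0.
Qed.

Lemma hk_s6 D r s : 0 <= D -> 0 <= r -> 0 < s -> hk D r s <= powR 6 D * hk D r (6 * s).
Proof.
move=> D0 r0 s0.
have pi0 : 0 < pi :> R := pi_gt0 R.
have e4 : powR (2 * pi * s) (- D) = powR 6 D * powR (2 * pi * (6 * s)) (- D).
  have -> : 2 * pi * (6 * s) = 6 * (2 * pi * s) by ring.
  rewrite [X in _ = _ * X](@powRM _ 6) ?mulr_ge0 // ?ltW // mulrA.
  by rewrite [6 `^ (- D)]powRN mulfV ?mul1r // gt_eqF // powR_gt0.
rewrite /hk e4 -mulrA ler_wpM2l ?powR_ge0 // ler_wpM2l ?powR_ge0 //.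
rewrite ler_expR !mulNr lerN2 ler_pdivrMr ?mulr_gt0 // mulrAC.
rewrite ler_pdivlMr ?mulr_gt0 //; nra.
Qed.

Lemma hk_point D r a s z th : 0 <= D -> 0 <= r -> 0 < a -> a <= s -> a <= z -> 0 < th ->
  `|hk D r z - hk D r s| <=
    powR 12 D * (2 * D + 14) * (`|z - s| / s) * hk D r (6 * s)
    + powR (2 * pi * s) (- D) * expR (th * (z - 3 * s) / 2)
    + powR (2 * pi * a) (- D) * expR (th * (s - 2 * z) / 2).
Proof.
move=> D0 r0 a0 asl az th0.
have pi0 : 0 < pi :> R := pi_gt0 R.
have s0 : 0 < s by lra.
have z0 : 0 < z by lra.
set X := powR 12 D * (2 * D + 14) * (`|z - s| / s) * hk D r (6 * s).
set U := powR (2 * pi * s) (- D) * expR (th * (z - 3 * s) / 2).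
set L := powR (2 * pi * a) (- D) * expR (th * (s - 2 * z) / 2).
have p12 : 0 < powR 12 D by rewrite powR_gt0.
have p6 : powR 6 D <= powR 12 D.
  by apply: (@ge0_ler_powR R D D0 6 12); rewrite ?nnegrE; lra.
have h6 := hk_ge0 D r (6 * s).
have D14 : 0 <= 2 * D + 14 by lra.
have X0 : 0 <= X.
  by rewrite /X mulr_ge0 // mulr_ge0 // ?mulr_ge0 ?powR_ge0 // invr_ge0 ltW.
have U0 : 0 <= U by rewrite /U mulr_ge0 ?powR_ge0 ?expR_ge0.
have L0 : 0 <= L by rewrite /L mulr_ge0 ?powR_ge0 ?expR_ge0.
have hss := hk_s6 D r s D0 r0 s0.
have hsX : forall q, 1 / 2 <= q -> q <= `|z - s| / s -> hk D r s <= X.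
  move=> q q2 qz; apply: le_trans hss _; rewrite /X.
  rewrite ler_wpM2r //.
  apply: (@le_trans _ _ (powR 12 D * ((2 * D + 14) * q))).
    rewrite -[X in X <= _]mulr1; apply: ler_pM; rewrite ?powR_ge0 //; nra.
  rewrite mulrA ler_wpM2l ?mulr_ge0 ?powR_ge0 //.
have [zl|zg] := ltP z (s / 2).
  apply: le_trans (ler_normB _ _) _.
  rewrite !ger0_norm ?hk_ge0 //.
  have hz : hk D r z <= L.
    apply: le_trans (hk_le_pow D r z r0 z0) _.
    apply: (@le_trans _ _ (powR (2 * pi * a) (- D))).
      by apply: powRN_le => //; [rewrite !mulr_gt0 | rewrite ler_pM2l ?mulr_gt0].
    rewrite /L -[X in X <= _]mulr1 ler_wpM2l ?powR_ge0 //.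
    have hq : 0 <= th * (s - 2 * z) / 2 by rewrite divr_ge0 // mulr_ge0 //; lra.
    apply: le_trans (expR_ge1Dx _); lra.
  have hs : hk D r s <= X.
    apply: (hsX (1 / 2)); first lra.
    rewrite ler_pdivlMr // ltr0_norm ?subr_lt0; lra.
  lra.
have [zm|zM] := leP z (3 * s).
  apply: le_trans (hk_mid D r s z D0 r0 s0 zg zm) _.
  have : powR 12 D * (2 * D + 12) * (`|z - s| / s) * hk D r (6 * s) <= X.
    rewrite /X; apply: ler_wpM2r => //; apply: ler_wpM2r.
      by rewrite divr_ge0 // ltW.
    by apply: ler_wpM2l; rewrite ?powR_ge0 //; lra.
  lra.
apply: le_trans (ler_normB _ _) _.
rewrite !ger0_norm ?hk_ge0 //.
have hz : hk D r z <= U.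
  apply: le_trans (hk_le_pow D r z r0 z0) _.
  apply: (@le_trans _ _ (powR (2 * pi * s) (- D))).
    by apply: powRN_le => //; [rewrite !mulr_gt0 | rewrite ler_pM2l ?mulr_gt0 //; lra].
  rewrite /U -[X in X <= _]mulr1 ler_wpM2l ?powR_ge0 //.
  have hq : 0 <= th * (z - 3 * s) / 2 by rewrite divr_ge0 // mulr_ge0 //; lra.
  apply: le_trans (expR_ge1Dx _); lra.
have hs : hk D r s <= X.
  apply: (hsX 2); first lra.
  rewrite ler_pdivlMr // ger0_norm ?subr_ge0; lra.
lra.
Qed.



Lemma powRN_le' (D x y : R) : 0 <= D -> 0 < x -> x <= y ->
  powR y (- D) <= powR x (- D).
Proof.
move=> D0 x0 xy.
have y0 : 0 < y by apply: lt_le_trans xy.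
rewrite !powRN lef_pV2 ?posrE ?powR_gt0 //.
by apply: ge0_ler_powR => //; rewrite nnegrE ltW.
Qed.

Lemma T1 (a th t c : R) : 0 < a -> 0 < th -> 0 <= t -> c = Num.sqrt (a * th) ->
  (c / (th * (a + t)) ^+ 2 * (th * t) + 1 / c) / 2 <= 1 / c.
Proof.
move=> a0 th0 t0 ce.
have c0 : 0 < c by rewrite ce sqrtr_gt0 mulr_gt0.
have cc : c ^+ 2 = a * th by rewrite ce sqr_sqrtr // mulr_ge0 // ltW.
have s0 : 0 < th * (a + t) by rewrite mulr_gt0 //; lra.
have h : c / (th * (a + t)) ^+ 2 * (th * t) <= 1 / c.
  rewrite -subr_ge0.
  have -> : 1 / c - c / (th * (a + t)) ^+ 2 * (th * t)
      = ((th * (a + t)) ^+ 2 - c ^+ 2 * (th * t)) / (c * (th * (a + t)) ^+ 2).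
    field; rewrite !gt_eqF //; lra.
  apply: divr_ge0; last by rewrite mulr_ge0 ?exprn_ge0 ?ltW.
  rewrite cc.
  have -> : (th * (a + t)) ^+ 2 - a * th * (th * t) = th ^+ 2 * (a ^+ 2 + a * t + t ^+ 2) by ring.
  by rewrite mulr_ge0 ?exprn_ge0 ?ltW //; nra.
lra.
Qed.

Lemma expR_half_le2 : expR (1 / 2) <= 2 :> R.
Proof.
have h1 := @expR_ge1Dx R (- (1 / 2)).
have h2 : expR (1 / 2) * expR (- (1 / 2)) = 1 :> R by rewrite expRxMexpNx_1.
have := @expR_gt0 R (1 / 2).
nra.
Qed.

Lemma expR_m1_le : expR (-1) <= 4 / 9 :> R.
Proof.
have h1 := @expR_ge1Dx R (1 / 2).
have e : expR 1 = expR (1 / 2) * expR (1 / 2) :> R by rewrite -expRD; congr expR; field.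
have h2 : expR 1 * expR (- 1) = 1 :> R by rewrite expRxMexpNx_1.
have E1 : 9 / 4 <= expR 1 :> R by rewrite e; nra.
have := @expR_gt0 R (-1).
nra.
Qed.

Lemma T2 (D a th t : R) : 0 <= D -> 0 < a -> 0 < th -> 0 <= t ->
  powR (2 * pi * (a + t)) (- D) *
    (expR (- (th * t + 2 * (th * (a + t))) / 2) *
      (expR (- (th * t)) * expR (th * t * expR (1 / 2))))
  <= powR (a + t) (- D) * expR (- (a * th) / 2).
Proof.
move=> D0 a0 th0 t0.
have pi2 := @pi_ge2 R.
apply: ler_pM; rewrite ?powR_ge0 ?mulr_ge0 ?expR_ge0 //.
  apply: powRN_le' => //; first lra.
  have : 0 <= a + t by lra.
  nra.
rewrite -!expRD ler_expR.
have hb := expR_half_le2.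
have l0 : 0 <= th * t by rewrite mulr_ge0 // ltW.
have : th * t * expR (1 / 2) <= th * t * 2 by rewrite ler_wpM2l.
have : th * t <= th * (a + t) by apply: ler_wpM2l; [exact: ltW | lra].
have : th * a <= th * (a + t) by apply: ler_wpM2l; [exact: ltW | lra].
have -> : a * th = th * a by ring.
lra.
Qed.


Lemma T3 (d : nat) (c0 a th t : R) : (1 <= d)%N -> 0 < c0 -> 0 < a -> 0 < th -> 0 <= t ->
  c0 <= th * a ->
  powR (2 * pi * a) (- (d%:R / 2)) *
    (expR (th * (t - a) / 2) * (expR (- (th * t)) * expR (th * t * expR (-1))))
  <= (1 + 18 * d%:R / c0) ^+ d * powR (a + t) (- (d%:R / 2)) * expR (- (a * th) / 2).
Proof.
move=> d1 c00 a0 th0 t0 c0a.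
set D := d%:R / 2.
set l := th * t.
set s := a + t.
set K0 := 1 + 18 * d%:R / c0.
have K0p : 0 <= K0.
  have : 0 <= 18 * d%:R / c0 by rewrite divr_ge0 // ?ltW // mulr_ge0.
  rewrite /K0; lra.
have dR : 1 <= d%:R :> R by rewrite ler1n.
have D0 : 0 <= D by rewrite /D divr_ge0 //; lra.
have Dd : D <= d%:R by rewrite /D; lra.
have l0 : 0 <= l by rewrite mulr_ge0 // ltW.
have s0 : 0 < s by rewrite /s; lra.
have pi2 := @pi_ge2 R.
have ex : expR (th * (t - a) / 2) * (expR (- (th * t)) * expR (th * t * expR (-1)))
    <= expR (- (a * th) / 2) * expR (- (l / 18)).
  rewrite -!expRD ler_expR.
  have q := expR_m1_le.
  have : l * expR (-1) <= l * (4 / 9) by rewrite ler_wpM2l.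
  have -> : th * (t - a) / 2 = l / 2 - a * th / 2 by rewrite /l; ring.
  rewrite -/l; lra.
have p1 : powR (2 * pi * a) (- D) <= powR a (- D).
  apply: powRN_le' => //; nra.
have sa1 : 1 <= s / a by rewrite ler_pdivlMr // mul1r /s; lra.
have e1 : powR a (- D) = powR s (- D) * powR (s / a) D.
  have q0 : 0 < s / a by apply: lt_le_trans sa1.
  move: q0; set q := s / a => q0.
  have hs : s = a * q by rewrite /q; field; rewrite gt_eqF.
  rewrite hs !powRN powRM ?ltW //.
  by rewrite invfM -mulrA mulVf ?mulr1 // gt_eqF // powR_gt0.
have p2 : powR (s / a) D <= (s / a) ^+ d.
  rewrite -powR_mulrn; last by rewrite divr_ge0 // ltW.
  exact: (ler_powR sa1 Dd).
have p3 : s / a <= K0 * expR (l / (18 * d%:R)).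
  apply: (@le_trans _ _ (K0 * (1 + l / (18 * d%:R)))); last first.
    by rewrite ler_wpM2l //; exact: expR_ge1Dx.
  rewrite -subr_ge0.
  have -> : K0 * (1 + l / (18 * d%:R)) - s / a =
      18 * d%:R / c0 + l / (18 * d%:R) + t * (th * a - c0) / (c0 * a).
    rewrite /K0 /l /s; field; rewrite !gt_eqF //; lra.
  have h1 : 0 <= 18 * d%:R / c0 by rewrite divr_ge0 // ?ltW // mulr_ge0.
  have h2 : 0 <= l / (18 * d%:R) by rewrite divr_ge0 // mulr_ge0 //; lra.
  have h3 : 0 <= t * (th * a - c0) / (c0 * a).
    apply: divr_ge0; last by rewrite mulr_ge0 // ltW.
    by apply: mulr_ge0 => //; rewrite subr_ge0.
  lra.
have p4 : (s / a) ^+ d <= K0 ^+ d * expR (l / 18).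
  have -> : expR (l / 18) = expR (l / (18 * d%:R)) ^+ d.
    rewrite -expRM_natl; congr expR; field; rewrite gt_eqF //; lra.
  rewrite -exprMn; apply: lerXn2r; rewrite ?nnegrE //.
    by apply: divr_ge0; apply: ltW.
  by rewrite mulr_ge0 ?expR_ge0.
have eL : expR (l / 18) * expR (- (l / 18)) = 1 by rewrite expRxMexpNx_1.
have E0 : 0 <= expR (- (a * th) / 2) * expR (- (l / 18)) by rewrite mulr_ge0 ?expR_ge0.
apply: le_trans (ler_pM (powR_ge0 _ _) _ p1 ex) _.
  by rewrite mulr_ge0 ?expR_ge0.
rewrite e1.
have ps0 : 0 <= powR s (- D) := powR_ge0 _ _.
have K00 : 0 <= K0 ^+ d by rewrite exprn_ge0.
have -> : powR s (- D) * powR (s / a) D * (expR (- (a * th) / 2) * expR (- (l / 18)))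
   = powR s (- D) * expR (- (a * th) / 2) * (powR (s / a) D * expR (- (l / 18))) by ring.
have -> : K0 ^+ d * powR s (- D) * expR (- (a * th) / 2)
   = powR s (- D) * expR (- (a * th) / 2) * (K0 ^+ d * (expR (l / 18) * expR (- (l / 18)))).
  by rewrite eL mulr1; ring.
apply: ler_wpM2l; first by rewrite mulr_ge0 ?expR_ge0.
rewrite mulrA ler_wpM2r ?expR_ge0 //.
exact: le_trans p2 p4.
Qed.




Definition Gf (D r a th t : R) (k : nat) : R :=
  powR 12 D * (2 * D + 14) * hk D r (6 * (a + t)) *
    ((Num.sqrt (a * th) / (th * (a + t)) ^+ 2 * (k%:R - th * t) ^+ 2
      + 1 / Num.sqrt (a * th)) / 2)
  + powR (2 * pi * (a + t)) (- D) * expR (- (th * t + 2 * (th * (a + t))) / 2)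
      * expR (1 / 2) ^+ k
  + powR (2 * pi * a) (- D) * expR (th * (t - a) / 2) * expR (-1) ^+ k.

Lemma amgm (u c : R) : 0 < c -> u <= (c * u ^+ 2 + 1 / c) / 2.
Proof.
move=> c0; rewrite -subr_ge0.
have -> : (c * u ^+ 2 + 1 / c) / 2 - u = (c * u - 1) ^+ 2 / c / 2.
  by field; rewrite gt_eqF.
by rewrite divr_ge0 // divr_ge0 ?sqr_ge0 // ltW.
Qed.

Lemma G_point (D r a th t : R) (k : nat) : 0 <= D -> 0 <= r -> 0 < a -> 0 < th -> 0 <= t ->
  `|hk D r (a + k%:R / th) - hk D r (a + t)| <= Gf D r a th t k.
Proof.
move=> D0 r0 a0 th0 t0.
have az : a <= a + k%:R / th by rewrite lerDl divr_ge0 // ltW.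
have as_ : a <= a + t by lra.
apply: le_trans (hk_point D r a (a + t) (a + k%:R / th) th D0 r0 a0 as_ az th0) _.
rewrite /Gf.
set c := Num.sqrt (a * th).
have c0 : 0 < c by rewrite sqrtr_gt0 mulr_gt0.
have s0 : 0 < a + t by lra.
apply: lerD; first apply: lerD.
- set P := powR 12 D * (2 * D + 14) * hk D r (6 * (a + t)).
  have P0 : 0 <= P by rewrite /P !mulr_ge0 ?powR_ge0 ?hk_ge0 //; lra.
  have -> : powR 12 D * (2 * D + 14) * (`|a + k%:R / th - (a + t)| / (a + t))
      * hk D r (6 * (a + t)) = P * (`|a + k%:R / th - (a + t)| / (a + t)) by rewrite /P; ring.
  apply: (ler_wpM2l P0).
  set u := `|k%:R - th * t| / (th * (a + t)).
  have e : `|a + k%:R / th - (a + t)| / (a + t) = u.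
    have -> : a + k%:R / th - (a + t) = (k%:R - th * t) / th by field; rewrite gt_eqF.
    have ti : `|th^-1| = th^-1 by rewrite ger0_norm // invr_ge0 ltW.
    rewrite normrM ti /u; field.
    by rewrite !gt_eqF.
  have e2 : c / (th * (a + t)) ^+ 2 * (k%:R - th * t) ^+ 2 = c * u ^+ 2.
    rewrite /u expr_div_n real_normK ?num_real //; field.
    by rewrite !gt_eqF.
  rewrite e e2; exact: amgm.
- rewrite -[X in _ <= X]mulrA -expRM_natl -expRD.
  have -> : th * (a + k%:R / th - 3 * (a + t)) / 2
      = - (th * t + 2 * (th * (a + t))) / 2 + k%:R * (1 / 2).
    by field; rewrite gt_eqF.
  by [].
- rewrite -[X in _ <= X]mulrA -expRM_natl -expRD.
  have -> : th * (a + t - 2 * (a + k%:R / th)) / 2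
      = th * (t - a) / 2 + k%:R * (-1).
    by field; rewrite gt_eqF.
  by [].
Qed.



Lemma PE_nd (l : R) (g : nat -> R) :
  (forall k, 0 <= expR (- l) * l ^+ k / (k`!)%:R * g k) ->
  {homo PE l g : n m / (n <= m)%N >-> n <= m}.
Proof.
move=> H n m nm; rewrite /PE (big_cat_nat (leq0n n) nm) /= lerDl.
by apply: sumr_ge0 => k _; exact: H.
Qed.

Lemma w_ge0 (l : R) k : 0 <= l -> 0 <= expR (- l) * l ^+ k / (k`!)%:R.
Proof. by move=> l0; rewrite divr_ge0 ?mulr_ge0 ?expR_ge0 ?exprn_ge0. Qed.

Lemma PE_lin (l al be ga de ep : R) (f g u v : nat -> R) n :
  PE l (fun k => al * ((be * f k + ga * g k) / 2) + de * u k + ep * v k) n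
  = al * ((be * PE l f n + ga * PE l g n) / 2) + de * PE l u n + ep * PE l v n.
Proof.
elim: n => [|n IH]; first by rewrite /PE !big_geq //; ring.
rewrite /PE !big_nat_recr //=; rewrite /PE in IH; rewrite IH; ring.
Qed.

Lemma main_core (d : nat) (c0 : R) :
  (1 <= d)%N -> 0 < c0 ->
  exists C : R, forall (eps theta t : R) (x y : 'rV[R]_d),
    0 < eps -> 0 < theta -> c0 <= theta * eps ^+ 2 -> 0 <= t ->
    `| psi theta eps t x y - heat (eps ^+ 2 + t) x y |
      <= C / Num.sqrt (eps ^+ 2 * theta) * heat (6 * (eps ^+ 2 + t)) x y
         + C / powR (eps ^+ 2 + t) (d%:R / 2) * expR (- (eps ^+ 2 * theta) / 2).
Proof.
move=> d1 c00.
have dR : 1 <= d%:R :> R by rewrite ler1n.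
set D : R := d%:R / 2.
have D0 : 0 <= D by rewrite /D divr_ge0 //; lra.
set K := powR 12 D * (2 * D + 14).
have K0' : 0 <= K by rewrite /K mulr_ge0 ?powR_ge0 //; lra.
set K0 := 1 + 18 * d%:R / c0.
have K0p : 0 <= K0.
  have : 0 <= 18 * d%:R / c0 by rewrite divr_ge0 // ?ltW // mulr_ge0 //; lra.
  rewrite /K0; lra.
have K0d : 0 <= K0 ^+ d by rewrite exprn_ge0.
exists (K + 1 + K0 ^+ d).
move=> eps theta t x y eps0 th0 c0le t0.
have heatE : forall z, heat z x y = hk D (sqdist x y) z by [].
have -> : psi theta eps t x y =
  limn (PE (theta * t) (fun k => hk D (sqdist x y) (eps ^+ 2 + k%:R / theta))) by [].
rewrite !heatE.
set a := eps ^+ 2.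
have a0 : 0 < a by rewrite exprn_gt0.
set r := sqdist x y.
have r0 : 0 <= r by rewrite /r /sqdist sumr_ge0 // => i _; rewrite sqr_ge0.
set l := theta * t.
have l0 : 0 <= l by rewrite /l mulr_ge0 // ltW.
set S := PE l (fun k => hk D r (a + k%:R / theta)).
set W := PE l (fun=> 1).
set G := Gf D r a theta t.
set c := Num.sqrt (a * theta).
have c0p : 0 < c by rewrite sqrtr_gt0 mulr_gt0.
set hs := hk D r (a + t).
set h6 := hk D r (6 * (a + t)).
set As := powR (2 * pi * (a + t)) (- D).
set Aa := powR (2 * pi * a) (- D).
set e1 := expR (- (l + 2 * (theta * (a + t))) / 2).
set e2 := expR (theta * (t - a) / 2).
set Gtot := K * h6 * ((c / (theta * (a + t)) ^+ 2 * l + 1 / c * 1) / 2)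
  + As * e1 * (expR (- l) * expR (l * expR (1 / 2)))
  + Aa * e2 * (expR (- l) * expR (l * expR (-1))).
have GC : PE l G n @[n --> \oo] --> Gtot.
  have -> : PE l G = fun n => K * h6 * ((c / (theta * (a + t)) ^+ 2 *
        PE l (fun k => (k%:R - l) ^+ 2) n + 1 / c * W n) / 2)
      + As * e1 * PE l (fun k => expR (1 / 2) ^+ k) n
      + Aa * e2 * PE l (fun k => expR (-1) ^+ k) n.
    apply/funext => n; rewrite -PE_lin.
    by apply: eq_bigr => k _; rewrite /G /Gf mulr1.
  rewrite /Gtot; apply: cvgD; first apply: cvgD.
  - apply: cvgMl_tmp; apply: cvgMr_tmp; apply: cvgD; apply: cvgMl_tmp.
      exact: cvg_PEvar.
    exact: cvg_PE1.
  - apply: cvgMl_tmp; exact: cvg_PE_pow.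
  - apply: cvgMl_tmp; exact: cvg_PE_pow.
have Gp : forall k, `|hk D r (a + k%:R / theta) - hs| <= G k.
  by move=> k; exact: (G_point D r a theta t k D0 r0 a0 th0 t0).
have Gnd : {homo PE l G : n m / (n <= m)%N >-> n <= m}.
  apply: PE_nd => k; apply: mulr_ge0; first exact: w_ge0.
  exact: le_trans (normr_ge0 _) (Gp k).
have Gle : forall n, PE l G n <= Gtot.
  move=> n; rewrite -(cvg_lim _ GC) //; exact: (nondecreasing_cvgn_le Gnd (cvgP _ GC) n).
have Wnd : {homo W : n m / (n <= m)%N >-> n <= m}.
  by apply: PE_nd => k; rewrite mulr1; exact: w_ge0.
have Wle : forall n, W n <= 1.
  move=> n; rewrite -(cvg_lim _ (cvg_PE1 l)) //.
  exact: (nondecreasing_cvgn_le Wnd (cvgP _ (cvg_PE1 l)) n).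
have hs0 : 0 <= hs := hk_ge0 D r (a + t).
have Hn : forall n, `|S n - hs * W n| <= Gtot.
  move=> n; apply: le_trans (Gle n).
  have -> : S n - hs * W n = PE l (fun k => hk D r (a + k%:R / theta) - hs) n.
    rewrite /S /W /PE big_distrr /= -sumrB; apply: eq_bigr => k _; ring.
  rewrite /PE; apply: le_trans (ler_norm_sum _ _ _) _.
  apply: ler_sum => k _; rewrite normrM ger0_norm ?w_ge0 //.
  by rewrite ler_wpM2l ?w_ge0.
have Snd : {homo S : n m / (n <= m)%N >-> n <= m}.
  by apply: PE_nd => k; rewrite mulr_ge0 ?w_ge0 ?hk_ge0.
have Sb : forall n, S n <= hs + Gtot.
  move=> n; have := Hn n; have := Wle n.
  have := ler_norm (S n - hs * W n).
  have : hs * W n <= hs by rewrite -[X in _ <= X]mulr1 ler_wpM2l.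
  lra.
have Scv : cvgn S.
  apply: nondecreasing_is_cvgn Snd _.
  by exists (hs + Gtot) => _ [n _ <-]; exact: Sb.
have L : `|S n - hs * W n| @[n --> \oo] --> `|limn S - hs * 1|.
  apply: cvg_norm; apply: cvgB; first exact: Scv.
  by apply: cvgMl_tmp; exact: cvg_PE1.
have HG : `|limn S - hs * 1| <= Gtot.
  rewrite -(cvg_lim _ L) //; apply: limr_le; first exact: (cvgP _ L).
  by apply: nearW => n; exact: Hn.
rewrite mulr1 in HG; apply: le_trans HG _.
have t1 := T1 a theta t c a0 th0 t0 erefl.
have t2 := T2 D a theta t D0 a0 th0 t0.
have t3 := T3 d c0 a theta t d1 c00 a0 th0 t0 c0le.
rewrite -/D -/l -/As -/Aa -/e2 in t2 t3.
rewrite -/l in t1.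
have h60 : 0 <= h6 := hk_ge0 D r (6 * (a + t)).
set P := powR (a + t) (- D).
set E := expR (- (a * theta) / 2).
have P0 : 0 <= P := powR_ge0 _ _.
have E0 : 0 <= E := expR_ge0 _.
have hP : P = 1 / (a + t) `^ D by rewrite /P powRN div1r.
rewrite /Gtot mulr1 -(mulrA As) -(mulrA Aa).
have T1' : K * h6 * ((c / (theta * (a + t)) ^+ 2 * l + 1 / c) / 2) <= (K + 1 + K0 ^+ d) / c * h6.
  apply: le_trans (ler_wpM2l (mulr_ge0 K0' h60) t1) _.
  have -> : (K + 1 + K0 ^+ d) / c * h6 = K * h6 * (1 / c) + (1 + K0 ^+ d) * h6 * (1 / c) by ring.
  rewrite lerDl; apply: mulr_ge0; first apply: mulr_ge0 => //; first lra.
  by rewrite divr_ge0 // ltW.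
have -> : (K + 1 + K0 ^+ d) / (a + t) `^ D * E = K * (P * E) + P * E + K0 ^+ d * P * E.
  by rewrite hP; ring.
rewrite -/e1 -/P -/E in t2.
rewrite -/K0 in t3.
rewrite -/P in t3.
rewrite -/E in t3.
have : 0 <= K * (P * E) by apply: mulr_ge0 => //; apply: mulr_ge0.
lra.
Qed.

End All.

Theorem mainTheorem19 (R : realType) (d : nat) (c0 : R) :
  (1 <= d)%N -> 0 < c0 ->
  exists C : R, forall (eps theta t : R) (x y : 'rV[R]_d),
    0 < eps -> 0 < theta -> c0 <= theta * eps ^+ 2 -> 0 <= t ->
    `| psi theta eps t x y - heat (eps ^+ 2 + t) x y |
      <= C / Num.sqrt (eps ^+ 2 * theta) * heat (6 * (eps ^+ 2 + t)) x y
         + C / powR (eps ^+ 2 + t) (d%:R / 2) * expR (- (eps ^+ 2 * theta) / 2).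
Proof. exact: main_core. Qed.
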